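(* Let $n=2k$ with $k\ge 2$. Then $W=\{c_1,v\}$ is a local resolving set of $U_n$, where $v=e_1$ if $k=2$, $v=c_2$ if $k=3$, $v=d_4$ if $k=4$, and $v=c_k$ if $k\ge 5$.
   Context: For $n\ge 3$, $U_n$ is the graph with vertex set $\{a_i,b_i,c_i,d_i,e_i : 1\le i\le n\}$ and edge set $\{a_ia_{i+1}, b_ib_{i+1}, e_ie_{i+1}, a_ib_i, b_ic_i, c_id_i, d_ie_i, c_{i+1}d_i : 1\le i\le n\}$, indices taken modulo $n$. A vertex $w$ resolves $u,v$ if $d(u,w)\neq d(v,w)$ ($d$ the graph distance). A set $W$ is a local resolving set if every two adjacent vertices are resolved by some element of $W$. *)

(* Defs.v *)
From mathcomp Require Import all_boot.
Set Implicit Arguments. Unset Strict Implicit. Unset Printing Implicit Defensive.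

Fixpoint ball (T : finType) (e : rel T) (k : nat) (x : T) : {set T} :=
  match k with
  | 0 => [set x]
  | k'.+1 => let B := ball e k' x in B :|: [set y | [exists z in B, e z y]]
  end.

(* Graph distance: least k such that y is within k steps of x.  In a
   connected graph on T the distance is < #|T|, so searching in
   0 .. #|T|-1 is exact (unreachable vertices would get value #|T|). *)
Definition gdist (T : finType) (e : rel T) (x y : T) : nat :=
  find (fun k => y \in ball e k x) (iota 0 #|T|).

Definition resolves (T : finType) (e : rel T) (w u v : T) : bool :=
  gdist e u w != gdist e v w.

Definition local_resolving (T : finType) (e : rel T) (W : {set T}) : Prop :=
  forall u v : T, e u v -> exists2 w, w \in W & resolves e w u v.

(* Vertices of U_n: pairs (kind, index).  kind 0,1,2,3,4 stands for
   a,b,c,d,e; index j : 'I_n stands for the paper's index j+1. *)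
Definition UV (n : nat) := ('I_5 * 'I_n)%type.

Definition lab (n : nat) (t i : nat) (x : UV n) : bool :=
  (nat_of_ord x.1 == t) && ((nat_of_ord x.2).+1 == i).

Definition Uedge0 (n : nat) (u v : UV n) : bool :=
  let a := nat_of_ord u.1 in let b := nat_of_ord v.1 in
  let i := nat_of_ord u.2 in let j := nat_of_ord v.2 in
  [|| [&& a == 0, b == 0 & j == i.+1 %% n],
      [&& a == 1, b == 1 & j == i.+1 %% n],
      [&& a == 4, b == 4 & j == i.+1 %% n],
      [&& a == 0, b == 1 & j == i],
      [&& a == 1, b == 2 & j == i],
      [&& a == 2, b == 3 & j == i],
      [&& a == 3, b == 4 & j == i]
    | [&& a == 3, b == 2 & j == i.+1 %% n]].

Definition Uadj (n : nat) : rel (UV n) := fun u v => Uedge0 u v || Uedge0 v u.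

(* Main.v *)
Require Import Defs.
From mathcomp Require Import all_boot zify.
Set Implicit Arguments. Unset Strict Implicit. Unset Printing Implicit Defensive.

Section Gen.
Variables (T : finType) (e : rel T).

Lemma in_ballS k x y : (y \in ball e k.+1 x) = (y \in ball e k x) || [exists z in ball e k x, e z y].
Proof. by rewrite /= inE inE. Qed.

Lemma ball_front k x z y : e x z -> y \in ball e k z -> y \in ball e k.+1 x.
Proof.
move=> exz; elim: k y => [|k IH] y.
  move=> h; rewrite in_ballS; move: h; rewrite /= inE => /eqP ->.
  by apply/orP; right; apply/existsP; exists x; rewrite inE eqxx.
rewrite in_ballS => /orP [/IH H|/existsP [w /andP [/IH H ewy]]].
  by rewrite in_ballS H.
by rewrite in_ballS; apply/orP; right; apply/existsP; exists w; rewrite H.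
Qed.

Hypothesis esym : symmetric e.

Lemma ball_sym k x y : (y \in ball e k x) = (x \in ball e k y).
Proof.
suff H : forall k x y, y \in ball e k x -> x \in ball e k y.
  by apply/idP/idP; apply: H.
move=> {}k; elim: k => [|k IH] {}x {}y.
  by rewrite /= !inE => /eqP ->.
rewrite in_ballS => /orP [/IH H|/existsP [z /andP [/IH H ezy]]].
  by rewrite in_ballS H.
by apply: ball_front H; rewrite esym.
Qed.

Lemma gdist_sym x y : gdist e x y = gdist e y x.
Proof. by rewrite /gdist; apply: eq_find => k; exact: ball_sym. Qed.

Lemma find_iota_le c m N : m <= c < m + N -> find (fun k => c <= k) (iota m N) = c - m.
Proof.
elim: N m => [|N IH] m; first by rewrite addn0 => /andP [h1 h2]; lia.
move=> /andP [h1 h2] /=.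
case: (ltnP m c) => hc.
  rewrite /= IH; first lia.
  apply/andP; split; lia.
by rewrite /=; lia.
Qed.

Lemma pot_gdist (f : T -> nat) (w : T) :
  f w = 0 ->
  (forall z y, e z y -> f y <= (f z).+1) ->
  (forall y, y != w -> exists z, e z y /\ (f z).+1 = f y) ->
  (forall y, f y < #|T|) ->
  forall y, gdist e w y = f y.
Proof.
move=> f0 lip pred bnd.
have B : forall k y, (y \in ball e k w) = (f y <= k).
  elim=> [|k IH] y.
    rewrite /= inE; apply/idP/idP; first by move/eqP ->; rewrite f0.
    rewrite leqn0 => /eqP fy; apply/negPn/negP => /pred [z [_ hz]].
    by rewrite fy in hz.
  rewrite in_ballS IH; apply/idP/idP.
    case/orP => [h|/existsP [z /andP [hz ezy]]]; first lia.
    rewrite IH in hz; have := lip _ _ ezy; lia.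
  move=> h; case: (leqP (f y) k) => h2 //=.
  have hy : y != w by apply/eqP => yw; move: h2; rewrite yw f0.
  case: (pred _ hy) => z [ezy hz].
  by apply/existsP; exists z; rewrite ezy IH andbT; lia.
move=> y; rewrite /gdist.
rewrite (eq_find (a2 := fun k => f y <= k)); last by move=> k; rewrite B.
rewrite find_iota_le ?subn0 //; have := bnd y; lia.
Qed.
End Gen.

Definition Fd (n t r : nat) : nat :=
  let m := minn r (n - r) in let mp := minn r (n.-1 - r) in
  match t with 0 => m + 2 | 1 => m + 1 | 2 => minn (2 * m) (m + 2)
  | 3 => minn (2 * mp + 1) (mp + 3) | _ => mp + 2 end.

Definition rotn n s i := (i + (n - s)) %% n.

Definition Pc n s (x : UV n) : nat := Fd n x.1 (rotn n s x.2).

Lemma modS_cases r n : r < n -> r.+1 %% n = if r.+1 == n then 0 else r.+1.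
Proof. move=> h; case: eqP => [->|ne]; first by rewrite modnn. rewrite modn_small //; lia. Qed.

Lemma rotnS n s i : rotn n s (i.+1 %% n) = (rotn n s i).+1 %% n.
Proof. by rewrite /rotn modnDml -(addn1 (_ %% n)) modnDml addn1 addSn. Qed.

Lemma rotn_lt n s i : 0 < n -> rotn n s i < n.
Proof. by move=> h; rewrite /rotn ltn_pmod. Qed.

Lemma Usym n : symmetric (@Uadj n).
Proof. by move=> u v; rewrite /Uadj orbC. Qed.

Lemma Pc_lip n s (z y : UV n) : 0 < n -> Uadj z y -> Pc s y <= (Pc s z).+1.
Proof.
move=> n0.
suff H : forall u v : UV n, Uedge0 u v -> Pc s v <= (Pc s u).+1 /\ Pc s u <= (Pc s v).+1.
  by case/orP => /H [].
move=> [a i] [b j]; rewrite /Uedge0 /Pc /=.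
have := rotn_lt s i n0; set r := rotn n s i => hr.
have E : forall t1 t2, Fd n t2 (r.+1 %% n) <= (Fd n t1 r).+1 /\ Fd n t1 r <= (Fd n t2 (r.+1 %% n)).+1
   -> Fd n t2 (r.+1 %% n) <= (Fd n t1 r).+1 /\ Fd n t1 r <= (Fd n t2 (r.+1 %% n)).+1 by [].
case/orP => [/and3P [/eqP -> /eqP -> /eqP ->]|].
  rewrite rotnS -/r modS_cases //; rewrite /Fd; case: eqP => ?; lia.
case/orP => [/and3P [/eqP -> /eqP -> /eqP ->]|].
  rewrite rotnS -/r modS_cases //; rewrite /Fd; case: eqP => ?; lia.
case/orP => [/and3P [/eqP -> /eqP -> /eqP ->]|].
  rewrite rotnS -/r modS_cases //; rewrite /Fd; case: eqP => ?; lia.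
case/orP => [/and3P [/eqP -> /eqP -> /eqP ->]|].
  rewrite -/r /Fd; lia.
case/orP => [/and3P [/eqP -> /eqP -> /eqP ->]|].
  rewrite -/r /Fd; lia.
case/orP => [/and3P [/eqP -> /eqP -> /eqP ->]|].
  rewrite -/r /Fd; lia.
case/orP => [/and3P [/eqP -> /eqP -> /eqP ->]|].
  rewrite -/r /Fd; lia.
move=> /and3P [/eqP -> /eqP -> /eqP ->].
rewrite rotnS -/r modS_cases //; rewrite /Fd; case: eqP => ?; lia.
Qed.

Lemma rot_eq n s i : s < n -> i < n -> rotn n s i = if s <= i then i - s else i + (n - s).
Proof.
move=> hs hi; rewrite /rotn; case: leqP => h.
  have -> : i + (n - s) = (i - s) + n by lia.
  by rewrite modnDr modn_small //; lia.
by rewrite modn_small //; lia.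
Qed.

Section P.
Variables (n : nat) (n0 : 0 < n).
Definition onext (i : 'I_n) : 'I_n := Ordinal (ltn_pmod i.+1 n0).
Definition oprev (i : 'I_n) : 'I_n := Ordinal (ltn_pmod (i + n.-1) n0).
Definition K t : 'I_5 := inord t.

Lemma onextE (i : 'I_n) : nat_of_ord (onext i) = if i.+1 == n then 0 else i.+1.
Proof. by rewrite /= modS_cases. Qed.
Lemma oprevE (i : 'I_n) : nat_of_ord (oprev i) = if i == 0 :> nat then n.-1 else i.-1.
Proof.
rewrite /=; have hi := ltn_ord i; case: eqP => h.
  by rewrite h add0n modn_small //; lia.
have -> : i + n.-1 = i.-1 + n by lia.
by rewrite modnDr modn_small //; lia.
Qed.
Lemma oprevS (i : 'I_n) : (oprev i).+1 %% n = i.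
Proof.
have hi := ltn_ord i; rewrite oprevE; case: eqP => h.
  by rewrite prednK // modnn h.
by rewrite prednK ?modn_small //; lia.
Qed.
Lemma KE t : t < 5 -> nat_of_ord (K t) = t.
Proof. by move=> h; rewrite inordK. Qed.
End P.

Lemma prevE r n : r < n -> (r + n.-1) %% n = if r == 0 then n.-1 else r.-1.
Proof.
move=> hi; case: eqP => h.
  by rewrite h add0n modn_small //; lia.
have -> : r + n.-1 = r.-1 + n by lia.
by rewrite modnDr modn_small //; lia.
Qed.

Lemma rotnP n s i : rotn n s ((i + n.-1) %% n) = (rotn n s i + n.-1) %% n.
Proof. by rewrite /rotn modnDml addnAC modnDml addnAC. Qed.

Ltac edge := rewrite /Uadj /Uedge0 /=; rewrite ?eqxx ?orbT //.

Lemma Pc_pred n k s (w y : UV n) (n0 : 0 < n) : 2 <= k -> n = k.*2 -> s < n ->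
  nat_of_ord w.1 = 2 -> nat_of_ord w.2 = s -> y != w ->
  exists z, Uadj z y /\ (Pc s z).+1 = Pc s y.
Proof.
move=> hk hn hs hw1 hw2 hyw.
case: y hyw => [[t ht] i] hyw.
have hi := ltn_ord i.
have hp : ((i + n.-1) %% n).+1 %% n = i := oprevS n0 i.
have hr := rotn_lt s i n0.
have hr0 : rotn n s i = 0 -> t <> 2.
  move=> h0 ht2; move: h0; rewrite rot_eq // => h0.
  have his : nat_of_ord i = s by move: h0; case: leqP; lia.
  move/eqP: hyw; apply; case: w hw1 hw2 => [w1 w2] /= hw1 hw2.
  congr pair; apply: val_inj => /=; lia.
rewrite /Pc /=.
move: hr hr0; set r := rotn n s i => hr hr0.
clear hyw; case: t ht hr0 => [|[|[|[|[|t]]]]] ht hr0 //.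
-
  exists (@Ordinal 5 1 isT, i); split; first by edge.
  rewrite /= -/r /Fd; lia.
-
  case: (posnP r) => h0.
    exists (@Ordinal 5 2 isT, i); split; first by edge.
    rewrite /= -/r /Fd h0; lia.
  case: (leqP r k) => hk2.
    exists (@Ordinal 5 1 isT, oprev n0 i); split; first by edge; rewrite hp eqxx.
    rewrite /= rotnP -/r prevE // /Fd; case: eqP => ?; lia.
  exists (@Ordinal 5 1 isT, onext n0 i); split; first by edge.
  rewrite /= rotnS -/r modS_cases // /Fd; case: eqP => ?; lia.
-
  case: (posnP r) => h0; first by case: (hr0 h0).
  case: (eqVneq r 1) => h1.
    exists (@Ordinal 5 3 isT, oprev n0 i); split; first by edge; rewrite hp eqxx.
    rewrite /= rotnP -/r prevE // /Fd; case: eqP => ?; lia.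
  case: (eqVneq r n.-1) => h2.
    exists (@Ordinal 5 3 isT, i); split; first by edge.
    rewrite /= -/r /Fd; lia.
  exists (@Ordinal 5 1 isT, i); split; first by edge.
  rewrite /= -/r /Fd; lia.
-
  case: (posnP r) => h0.
    exists (@Ordinal 5 2 isT, i); split; first by edge.
    rewrite /= -/r /Fd; lia.
  case: (eqVneq r n.-1) => h2.
    exists (@Ordinal 5 2 isT, onext n0 i); split; first by edge.
    rewrite /= rotnS -/r modS_cases // /Fd; case: eqP => ?; lia.
  case: (eqVneq r 1) => h1.
    exists (@Ordinal 5 2 isT, i); split; first by edge.
    rewrite /= -/r /Fd; lia.
  case: (eqVneq r n.-2) => h3.
    exists (@Ordinal 5 2 isT, onext n0 i); split; first by edge.
    rewrite /= rotnS -/r modS_cases // /Fd; case: eqP => ?; lia.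
  exists (@Ordinal 5 4 isT, i); split; first by edge.
  rewrite /= -/r /Fd; lia.
-
  case: (boolP ((r == 0) || (r == n.-1))) => h0.
    exists (@Ordinal 5 3 isT, i); split; first by edge.
    rewrite /= -/r /Fd; case/orP: h0 => /eqP ?; lia.
  case: (leqP r k.-1) => hk2.
    exists (@Ordinal 5 4 isT, oprev n0 i); split; first by edge; rewrite hp eqxx.
    rewrite /= rotnP -/r prevE // /Fd; case: eqP => ?; lia.
  exists (@Ordinal 5 4 isT, onext n0 i); split; first by edge.
  rewrite /= rotnS -/r modS_cases // /Fd; case: eqP => ?; lia.
Qed.

Lemma Fd_le n t r : Fd n t r <= n + 3.
Proof. by rewrite /Fd; case: t => [|[|[|[|t]]]]; lia. Qed.

Lemma Pc_gdist n k s (w : UV n) : 2 <= k -> n = k.*2 -> s < n ->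
  nat_of_ord w.1 = 2 -> nat_of_ord w.2 = s -> forall y, gdist (@Uadj n) y w = Pc s y.
Proof.
move=> hk hn hs h1 h2 y; have n0 : 0 < n by lia.
rewrite (gdist_sym (@Usym n)).
apply: (pot_gdist (f := Pc s)).
- rewrite /Pc h1 h2 /rotn subnKC ?modnn /Fd //; lia.
- by move=> z y'; apply: Pc_lip.
- by move=> y' hy; apply: (Pc_pred n0 hk hn hs h1 h2 hy).
- move=> y'; rewrite card_prod !card_ord /Pc; have := Fd_le n y'.1 (rotn n s y'.2) => H; apply: leq_ltn_trans H _; lia.
Qed.

Definition E1 n k i r1 := (k.-1 <= i /\ r1 = i - k.-1) \/ (i < k.-1 /\ r1 = i + (n - k.-1)).

Ltac se bad := move=> hk hn hi hr; rewrite /E1 => e1; rewrite ?modS_cases //;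
  case: (boolP bad) => hb; [right|left]; rewrite /Fd; repeat (case: eqP => ?); lia.


Lemma e_next0 : forall n k i r1 : nat, 5 <= k -> n = 2 * k -> i < n -> r1 < n -> E1 n k i r1 ->  Fd n 0 i <> Fd n 0 (i.+1 %% n) \/ Fd n 0 r1 <> Fd n 0 (r1.+1 %% n).
Proof. move=> n k i r1; se false. Qed.
Lemma e_next1 : forall n k i r1 : nat, 5 <= k -> n = 2 * k -> i < n -> r1 < n -> E1 n k i r1 ->  Fd n 1 i <> Fd n 1 (i.+1 %% n) \/ Fd n 1 r1 <> Fd n 1 (r1.+1 %% n).
Proof. move=> n k i r1; se false. Qed.
Lemma e_next4 : forall n k i r1 : nat, 5 <= k -> n = 2 * k -> i < n -> r1 < n -> E1 n k i r1 ->  Fd n 4 i <> Fd n 4 (i.+1 %% n) \/ Fd n 4 r1 <> Fd n 4 (r1.+1 %% n).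
Proof. move=> n k i r1; se ((i == k.-1) || (i == n.-1)). Qed.
Lemma e_dc : forall n k i r1 : nat, 5 <= k -> n = 2 * k -> i < n -> r1 < n -> E1 n k i r1 ->  Fd n 3 i <> Fd n 2 (i.+1 %% n) \/ Fd n 3 r1 <> Fd n 2 (r1.+1 %% n).
Proof. move=> n k i r1; se (2 <= i <= k.-1). Qed.
Lemma e_ab : forall n k i r1 : nat, 5 <= k -> n = 2 * k -> i < n -> r1 < n -> E1 n k i r1 ->  Fd n 0 i <> Fd n 1 i \/ Fd n 0 r1 <> Fd n 1 r1.
Proof. move=> n k i r1; se false. Qed.
Lemma e_bc : forall n k i r1 : nat, 5 <= k -> n = 2 * k -> i < n -> r1 < n -> E1 n k i r1 ->  Fd n 1 i <> Fd n 2 i \/ Fd n 1 r1 <> Fd n 2 r1.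
Proof. move=> n k i r1; se ((i == 1) || (i == n.-1)). Qed.
Lemma e_cd : forall n k i r1 : nat, 5 <= k -> n = 2 * k -> i < n -> r1 < n -> E1 n k i r1 ->  Fd n 2 i <> Fd n 3 i \/ Fd n 2 r1 <> Fd n 3 r1.
Proof. move=> n k i r1; se (k <= i <= n - 3). Qed.
Lemma e_de : forall n k i r1 : nat, 5 <= k -> n = 2 * k -> i < n -> r1 < n -> E1 n k i r1 ->  Fd n 3 i <> Fd n 4 i \/ Fd n 3 r1 <> Fd n 4 r1.
Proof. move=> n k i r1; se ((i == 1) || (i == n - 2)). Qed.

Lemma res_big n k (u v : UV n) : 5 <= k -> n = k.*2 -> Uadj u v ->
  Pc 0 u <> Pc 0 v \/ Pc k.-1 u <> Pc k.-1 v.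
Proof.
move=> hk hn.
suff H : forall u v : UV n, Uedge0 u v -> Pc 0 u <> Pc 0 v \/ Pc k.-1 u <> Pc k.-1 v.
  case/orP => /H; first by [].
  by case=> h; [left|right] => e; apply: h.
have n0 : 0 < n by lia.
have hn2 : n = 2 * k by lia.
move=> [a i] [b j]; rewrite /Uedge0 /Pc /=.
have hi := ltn_ord i.
have hr := rotn_lt k.-1 i n0.
have e0 : rotn n 0 i = i by rewrite rot_eq // subn0.
have e1 : E1 n k i (rotn n k.-1 i).
  have hk1 : k.-1 < n by lia.
  rewrite /E1 rot_eq //; case: leqP; lia.
case/orP => [/and3P [/eqP -> /eqP -> /eqP ->]|].
  by rewrite !rotnS e0; exact: (@e_next0 _ _ _ _ hk hn2 hi hr e1).
case/orP => [/and3P [/eqP -> /eqP -> /eqP ->]|].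
  by rewrite !rotnS e0; exact: (@e_next1 _ _ _ _ hk hn2 hi hr e1).
case/orP => [/and3P [/eqP -> /eqP -> /eqP ->]|].
  by rewrite !rotnS e0; exact: (@e_next4 _ _ _ _ hk hn2 hi hr e1).
case/orP => [/and3P [/eqP -> /eqP -> /eqP ->]|].
  by rewrite e0; exact: (@e_ab _ _ _ _ hk hn2 hi hr e1).
case/orP => [/and3P [/eqP -> /eqP -> /eqP ->]|].
  by rewrite e0; exact: (@e_bc _ _ _ _ hk hn2 hi hr e1).
case/orP => [/and3P [/eqP -> /eqP -> /eqP ->]|].
  by rewrite e0; exact: (@e_cd _ _ _ _ hk hn2 hi hr e1).
case/orP => [/and3P [/eqP -> /eqP -> /eqP ->]|].
  by rewrite e0; exact: (@e_de _ _ _ _ hk hn2 hi hr e1).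
move=> /and3P [/eqP -> /eqP -> /eqP ->].
by rewrite !rotnS e0; exact: (@e_dc _ _ _ _ hk hn2 hi hr e1).
Qed.

Definition tf n (tbl : seq nat) (y : UV n) : nat := nth 0 tbl (y.1 * n + y.2).

Definition mko n i : option 'I_n :=
  (if i < n as b return (i < n = b -> option 'I_n) then fun h => Some (Ordinal h)
   else fun _ => None) (erefl (i < n)).

Lemma mkoK n (j : 'I_n) : mko n j = Some j.
Proof.
rewrite /mko; case: j => j hj /=.
have E : forall b (e : j < n = b), (if b as b0 return (j < n = b0 -> option 'I_n)
   then fun h => Some (Ordinal h) else fun _ => None) e = Some (Ordinal hj).
  case=> e /=; last by rewrite hj in e.
  by congr Some; apply: val_inj.
exact: E.
Qed.

Definition ordl n : seq 'I_n := pmap (@mko n) (iota 0 n).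
Lemma mem_ordl n (j : 'I_n) : j \in ordl n.
Proof. by rewrite mem_pmap -(mkoK j) map_f // mem_iota /= add0n ltn_ord. Qed.

Definition allU n : seq (UV n) := [seq (a, i) | a <- ordl 5, i <- ordl n].
Lemma allUP n (u : UV n) : u \in allU n.
Proof. case: u => a i; apply: allpairs_f; exact: mem_ordl. Qed.

Lemma tbl_gdist n (f : UV n -> nat) (w : UV n) :
  f w == 0 ->
  all (fun z => all (fun y => Uadj z y ==> (f y <= (f z).+1)) (allU n)) (allU n) ->
  all (fun y => (y == w) || has (fun z => Uadj z y && ((f z).+1 == f y)) (allU n)) (allU n) ->
  all (fun y => f y < 5 * n) (allU n) ->
  forall y, gdist (@Uadj n) y w = f y.
Proof.
move=> /eqP h0 /allP h1 /allP h2 /allP h3 y.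
rewrite (gdist_sym (@Usym n)); apply: pot_gdist => //.
- by move=> z y' hz; move: (h1 z (allUP z)) => /allP /(_ y' (allUP y')) /implyP; apply.
- move=> y' hy; move: (h2 y' (allUP y')); rewrite (negbTE hy) /= => /hasP [z _ /andP [hz /eqP e]].
  by exists z.
- by move=> y'; rewrite card_prod !card_ord; apply: h3; exact: allUP.
Qed.

Definition rcheck n (f g : UV n -> nat) :=
  all (fun u => all (fun v => Uadj u v ==> (f u != f v) || (g u != g v)) (allU n)) (allU n).

Lemma rcheckP n f g : @rcheck n f g -> forall u v, Uadj u v -> (f u != f v) || (g u != g v).
Proof. by move=> /allP h u v; move: (h u (allUP u)) => /allP /(_ v (allUP v)) /implyP. Qed.

Definition t4 := [:: 4; 4; 5; 5; 3; 3; 4; 4; 2; 2; 3; 3; 1; 2; 3; 2; 0; 1; 2; 1].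
Definition t8 := [:: 6; 5; 4; 3; 3; 4; 5; 6; 5; 4; 3; 2; 2; 3; 4; 5; 6; 5; 3; 1; 1; 3; 5; 6; 5; 4; 2; 0; 2; 4; 5; 6; 4; 3; 2; 1; 2; 3; 4; 5].

Definition we4 : UV 4 := (@Ordinal 5 4 isT, @Ordinal 4 0 isT).
Definition wd8 : UV 8 := (@Ordinal 5 3 isT, @Ordinal 8 3 isT).

Lemma g4 : forall y, gdist (@Uadj 4) y we4 = tf t4 y.
Proof. apply: tbl_gdist; vm_compute; reflexivity. Qed.
Lemma g8 : forall y, gdist (@Uadj 8) y wd8 = tf t8 y.
Proof. apply: tbl_gdist; vm_compute; reflexivity. Qed.

Lemma c4 : rcheck (@Pc 4 0) (tf t4).
Proof. vm_compute; reflexivity. Qed.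
Lemma c8 : rcheck (@Pc 8 0) (tf t8).
Proof. vm_compute; reflexivity. Qed.
Lemma c6 : rcheck (@Pc 6 0) (Pc 1).
Proof. vm_compute; reflexivity. Qed.
Unset Implicit Arguments.

Theorem lemma4p4 (n k : nat) (hk : 2 <= k) (hn : n = k.*2) :
  local_resolving (@Uadj n)
    [set x : UV n | lab 2 1 x ||
       (if k == 2 then lab 4 1 x
        else if k == 3 then lab 2 2 x
        else if k == 4 then lab 3 4 x
        else lab 2 k x)].
Proof.
move=> u v huv.
have n0 : 0 < n by lia.
pose w0 : UV n := (@Ordinal 5 2 isT, Ordinal n0).
have w0W : w0 \in [set x : UV n | lab 2 1 x ||
       (if k == 2 then lab 4 1 x
        else if k == 3 then lab 2 2 x
        else if k == 4 then lab 3 4 x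
        else lab 2 k x)] by rewrite inE /lab.
have g0 := @Pc_gdist n k 0 w0 hk hn n0 erefl erefl.
case: (ltnP k 5) => hk5.
  have : k = 2 \/ k = 3 \/ k = 4 by lia.
  case=> [hk2|[hk2|hk2]]; subst k; simpl in hn; subst n.
  - case/orP: (rcheckP c4 huv) => h.
      by exists w0 => //; rewrite /resolves !g0.
    by exists we4; [rewrite inE /lab /= | rewrite /resolves !g4].
  - pose w1 : UV 6 := (@Ordinal 5 2 isT, @Ordinal 6 1 isT).
    have g1 := @Pc_gdist 6 3 1 w1 hk erefl isT erefl erefl.
    case/orP: (rcheckP c6 huv) => h.
      by exists w0 => //; rewrite /resolves !g0.
    by exists w1; [rewrite inE /lab /= | rewrite /resolves !g1].
  - case/orP: (rcheckP c8 huv) => h.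
      by exists w0 => //; rewrite /resolves !g0.
    by exists wd8; [rewrite inE /lab /= | rewrite /resolves !g8].
have hk1 : k.-1 < n by lia.
pose w1 : UV n := (@Ordinal 5 2 isT, Ordinal hk1).
have g1 := @Pc_gdist n k k.-1 w1 hk hn hk1 erefl erefl.
case: (res_big hk5 hn huv) => h.
  by exists w0 => //; rewrite /resolves !g0; apply/eqP.
exists w1; last by rewrite /resolves !g1; apply/eqP.
rewrite inE; case: eqP => [?|_]; first lia.
case: eqP => [?|_]; first lia.
case: eqP => [?|_]; first lia.
apply/orP; right; rewrite /lab /=; apply/eqP; lia.
Qed.
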